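(* Let $Z(n)=\sum_{k=0}^{n-1}\frac{1+(-1)^{k}k!(n-k-1)!}{n}$ for positive integers $n$. For $0<\lvert x\rvert<1$, \[ \sum_{n=0}^{\infty}Z(n+1)\frac{x^{n}}{n!}=e^{x}-\frac{1}{x^{2}}\ln\left(1-x^{2}\right). \] *)

(* Defs.v *)
From Stdlib Require Import Reals List Factorial.
From Coquelicot Require Import Coquelicot.
Open Scope R_scope.

Definition Zfun (n : nat) : R :=
  fold_right Rplus 0
    (map (fun k => (1 + (-1) ^ k * INR (fact k * fact (n - k - 1))%nat) / INR n)
         (seq 0 n)).

(* Main.v *)
Require Import Defs.
From Stdlib Require Import Reals List Factorial Lra Lia.
From Coquelicot Require Import Coquelicot.
Open Scope R_scope.

Definition lna (n : nat) : R := match n with O => 0 | S k => / INR (S k) end.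

Lemma PSd_lna : forall n, PS_derive lna n = 1.
Proof. intro n. unfold PS_derive, lna. field. apply not_0_INR; lia. Qed.

Lemma rad_one (y : R) : Rabs y < 1 -> Rbar_lt (Rabs y) (CV_radius (fun _ => 1)).
Proof.
  intro hy.
  destruct (Rbar_lt_le_dec (Rabs y) (CV_radius (fun _ => 1))) as [h|h]; [exact h|].
  exfalso.
  set (r := (Rabs y + 1)/2).
  assert (hr : Rbar_lt (CV_radius (fun _ => 1)) (Rabs r)).
  { eapply Rbar_le_lt_trans; [exact h|]. simpl. unfold r.
    pose proof (Rabs_pos y). rewrite (Rabs_pos_eq ((Rabs y + 1)/2)); lra. }
  apply (CV_disk_outside _ _ hr).
  apply is_lim_seq_ext with (fun n => r ^ n).
  { intro n; ring. }
  apply is_lim_seq_geom. unfold r. pose proof (Rabs_pos y). rewrite (Rabs_pos_eq ((Rabs y + 1)/2)); lra.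
Qed.

Lemma rad_lna (y : R) : Rabs y < 1 -> Rbar_lt (Rabs y) (CV_radius lna).
Proof.
  intro hy. rewrite <- CV_radius_derive.
  rewrite (CV_radius_ext _ (fun _ => 1)) by apply PSd_lna.
  now apply rad_one.
Qed.

Lemma PS_one (y : R) : Rabs y < 1 -> PSeries (fun _ => 1) y = / (1 - y).
Proof.
  intro hy. apply is_pseries_unique.
  unfold is_pseries. eapply is_series_ext; [|apply (is_series_geom y hy)].
  intro n. cbv beta. unfold scal; simpl. unfold mult; simpl. rewrite Rmult_1_r. symmetry. apply pow_n_pow.
Qed.

Lemma lna_val (y : R) : Rabs y < 1 -> PSeries lna y = - ln (1 - y).
Proof.
  intro hy.
  set (g := fun t => PSeries lna t + ln (1 - t)).
  assert (hd : forall c, Rabs (c - 0) <= Rabs y -> is_derive g c 0).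
  { intros c hc. rewrite Rminus_0_r in hc.
    assert (hc1 : Rabs c < 1) by lra.
    assert (hpos : 0 < 1 - c) by (apply Rabs_lt_between in hc1; lra).
    unfold g.
    replace 0 with (PSeries (PS_derive lna) c + (-1) * / (1 - c)).
    2:{ rewrite (PSeries_ext _ (fun _ => 1)) by apply PSd_lna.
        rewrite PS_one by exact hc1. field. lra. }
    apply (is_derive_plus (fun t => PSeries lna t) (fun t => ln (1 - t))).
    - apply is_derive_PSeries. now apply rad_lna.
    - apply (is_derive_comp ln (fun t => 1 - t)).
      + apply is_derive_ln. exact hpos.
      + auto_derive; [exact I|ring]. }
  destruct (MVT_cor4 g (fun _ => 0) 0 (Rabs y) hd y) as [c [hc _]].
  { rewrite Rminus_0_r. lra. }
  assert (g 0 = 0).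
  { unfold g. rewrite PSeries_0. simpl. rewrite Rminus_0_r, ln_1. ring. }
  unfold g in hc, H. lra.
Qed.

Lemma ln_series (y : R) : y <> 0 -> Rabs y < 1 ->
  is_series (fun j => y ^ j / INR (S j)) (- ln (1 - y) / y).
Proof.
  intros y0 hy.
  assert (H := PSeries_correct lna y (CV_radius_inside _ _ (rad_lna y hy))).
  rewrite lna_val in H by exact hy.
  unfold is_pseries in H.
  assert (H1 : is_series (fun k => scal (pow_n y (S k)) (lna (S k))) (- ln (1 - y))).
  { apply (is_series_incr_1 (fun k => scal (pow_n y k) (lna k))).
    replace (- ln (1 - y)) with (plus (- ln (1 - y)) (scal (pow_n y 0) (lna 0))) in H; [exact H|].
    unfold scal; simpl. unfold mult, plus; simpl. ring. }
  apply (is_series_scal (/ y)) in H1.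
  replace (- ln (1 - y) / y) with (scal (/ y) (- ln (1 - y))).
  2:{ unfold scal; simpl; unfold mult; simpl. unfold Rdiv. ring. }
  eapply is_series_ext; [|exact H1].
  intro n. cbv beta. unfold scal; simpl. unfold mult; simpl.
  change (pow_n y (S n)) with (y * pow_n y n). rewrite pow_n_pow.
  unfold lna. unfold Rdiv. field. split; [change (INR (S n) <> 0); apply not_0_INR; lia|exact y0].
Qed.
Lemma fold_add (l : list R) c : fold_right Rplus c l = fold_right Rplus 0 l + c.
Proof. induction l; simpl; [ring| rewrite IHl; ring]. Qed.

Lemma sumR (f : nat -> R) n : fold_right Rplus 0 (map f (seq 0 (S n))) = sum_f_R0 f n.
Proof.
  induction n.
  - simpl. ring.
  - rewrite seq_S, map_app, fold_right_app, fold_add, IHn. simpl. ring.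
Qed.

Lemma tele (b : nat -> R) n :
  sum_f_R0 (fun k => (-1)^k * (b k + b (S k))) n = b O + (-1)^n * b (S n).
Proof. induction n; simpl; [ring|]. rewrite IHn. simpl. ring. Qed.

Lemma key m : INR (m+2) * sum_f_R0 (fun k => (-1)^k * INR (fact k * fact (m-k))) m
  = INR (fact (m+1)) * (1 + (-1)^m).
Proof.
  rewrite scal_sum.
  rewrite (sum_eq _ (fun k => (-1)^k * (INR (fact k * fact (m+1-k)) + INR (fact (S k) * fact (m+1-S k))))).
  2:{ intros k hk.
      replace (m+1-k)%nat with (S (m-k)) by lia.
      replace (m+1-S k)%nat with (m-k)%nat by lia.
      change (fact (S (m-k))) with (S (m-k) * fact (m-k))%nat.
      change (fact (S k)) with (S k * fact k)%nat.
      rewrite !mult_INR, !S_INR, minus_INR by lia. rewrite plus_INR. simpl. ring. }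
  rewrite tele.
  replace (m+1-S m)%nat with O by lia.
  replace (m+1-0)%nat with (m+1)%nat by lia.
  rewrite !mult_INR. replace (m+1)%nat with (S m) by lia. change (fact (S m)) with (S m * fact m)%nat. simpl (fact 0). rewrite mult_INR. change (INR 1) with 1. ring.
Qed.

Lemma term m : Zfun (m+1) = 1 + INR (fact m) * (1 + (-1)^m) / INR (m+2).
Proof.
  unfold Zfun. replace (m+1)%nat with (S m) by lia. rewrite sumR.
  rewrite (sum_eq _ (fun k => / INR (S m) + (-1)^k * INR (fact k * fact (m-k)) * / INR (S m))).
  2:{ intros k hk. replace (S m - k - 1)%nat with (m-k)%nat by lia. unfold Rdiv. ring. }
  rewrite sum_plus, sum_cte, <- scal_sum.
  assert (K := key m).
  assert (h1 : INR (S m) <> 0) by (apply not_0_INR; lia).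
  assert (h2 : INR (m+2) <> 0) by (apply not_0_INR; lia).
  replace (sum_f_R0 (fun k => (-1)^k * INR (fact k * fact (m-k))) m)
    with (INR (fact (m+1)) * (1 + (-1)^m) / INR (m+2)).
  2:{ rewrite <- K. field. exact h2. }
  replace (m+1)%nat with (S m) by lia. change (fact (S m)) with (S m * fact m)%nat.
  rewrite mult_INR. field. split; assumption.
Qed.

Lemma even_sums (x : R) j :
  let c := fun n => (1 + (-1)^n) / INR (n+2) * x^n in
  let e := fun j => (x^2)^j / INR (S j) in
  sum_f_R0 c (2*j) = sum_f_R0 e j /\ sum_f_R0 c (S (2*j)) = sum_f_R0 e j.
Proof.
  intros c e.
  assert (codd : forall j, c (S (2*j)) = 0).
  { intro i. unfold c. rewrite pow_1_odd. unfold Rdiv. ring. }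
  induction j.
  - simpl. unfold c, e. simpl. split; field; try (change (2+0) with 2; lra).
  - destruct IHj as [_ IH2].
    assert (E : sum_f_R0 c (2 * S j) = sum_f_R0 e (S j)).
    { replace (2 * S j)%nat with (S (S (2*j))) by lia.
      change (sum_f_R0 c (S (S (2*j)))) with (sum_f_R0 c (S (2*j)) + c (S (S (2*j)))).
      rewrite IH2. simpl (sum_f_R0 e (S j)). f_equal.
      unfold c, e. replace (S (S (2*j))) with (2 * S j)%nat by lia.
      rewrite pow_1_even, pow_mult.
      replace (INR (2 * S j + 2)) with (2 * INR (S (S j))).
      2:{ rewrite (S_INR (S j)), plus_INR, mult_INR, S_INR. simpl. ring. }
      field. apply not_0_INR; lia. }
    split; [exact E|].
    change (sum_f_R0 c (S (2 * S j))) with (sum_f_R0 c (2 * S j) + c (S (2 * S j))).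
    rewrite E, codd. ring.
Qed.

Lemma even_series (x L : R) :
  is_series (fun j => (x^2)^j / INR (S j)) L ->
  is_series (fun n => (1 + (-1)^n) / INR (n+2) * x^n) L.
Proof.
  intro H. apply is_series_Reals in H. apply is_series_Reals.
  intros eps he. destruct (H eps he) as [N HN].
  exists (2*N)%nat. intros n hn.
  destruct (Nat.Even_or_Odd n) as [[j hj]|[j hj]]; subst n.
  - destruct (even_sums x j) as [h _]. cbv zeta in h. rewrite h. apply HN. lia.
  - destruct (even_sums x j) as [_ h]. cbv zeta in h.
    replace (2*j+1)%nat with (S (2*j)) by lia. rewrite h. apply HN. lia.
Qed.

Lemma exp_series (x : R) : is_series (fun n => x^n / INR (fact n)) (exp x).
Proof.
  apply is_series_Reals. unfold exp. destruct (exist_exp x) as [l hl]. simpl.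
  unfold exp_in in hl. intros eps he. destruct (hl eps he) as [N HN].
  exists N. intros n hn. rewrite (sum_eq _ (fun i => / INR (fact i) * x ^ i)).
  - apply HN; exact hn.
  - intros. unfold Rdiv. ring.
Qed.

Theorem mainTheorem14 (x : R) (hx0 : 0 < Rabs x) (hx1 : Rabs x < 1) :
  is_series (fun n : nat => Zfun (n + 1)%nat * x ^ n / INR (fact n))
            (exp x - / (x ^ 2) * ln (1 - x ^ 2)).
Proof.
  assert (x0 : x <> 0) by (intro h; subst; rewrite Rabs_R0 in hx0; lra).
  assert (y0 : x^2 <> 0) by (apply pow_nonzero; exact x0).
  assert (y1 : Rabs (x^2) < 1).
  { rewrite <- RPow_abs. pose proof (Rabs_pos x). nra. }
  assert (HL := even_series x _ (ln_series (x^2) y0 y1)).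
  assert (HS := is_series_plus _ _ _ _ (exp_series x) HL).
  replace (exp x - / x^2 * ln (1 - x^2)) with (plus (exp x) (- ln (1 - x^2) / x^2)).
  2:{ unfold plus; simpl. field. exact x0. }
  eapply is_series_ext; [|exact HS].
  intro n. unfold plus; simpl. rewrite term.
  assert (INR (fact n) <> 0) by (apply INR_fact_neq_0).
  assert (INR (n+2) <> 0) by (apply not_0_INR; lia).
  field. split; assumption.
Qed.
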